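(* Let $\mathcal{X},\mathcal{Y}$ be topological spaces with $\mathcal{X}$ connected and simply connected, let $\phi:\mathcal{X}\to\mathbb{R}^m$ be continuous and injective, let $\rho:\mathbb{R}^n\to\mathcal{Y}$ be a continuous surjection admitting a section (a continuous $s:\mathcal{Y}\to\mathbb{R}^n$ with $\rho\circ s=1_{\mathcal{Y}}$), and let $\mathcal{F}$ be dense in $C(\mathbb{R}^m,\mathbb{R}^n)$ for the topology of uniform convergence on compacts. Then $\{\rho\circ f\circ\phi: f\in\mathcal{F}\}$ is dense in $C(\mathcal{X},\mathcal{Y})$ equipped with the compact-open topology.
   Context: The compact-open topology on $C(\mathcal{X},\mathcal{Y})$ is generated by the sets $\{f: f(K)\subseteq O\}$ with $K\subseteq\mathcal{X}$ compact and $O\subseteq\mathcal{Y}$ open. *)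

(* Defs.v *)
From HB Require Import structures.
From mathcomp Require Import all_boot all_order all_algebra.
From mathcomp Require Import all_classical all_reals all_analysis.
Set Implicit Arguments. Unset Strict Implicit. Unset Printing Implicit Defensive.
Import Order.TTheory GRing.Theory Num.Theory.
Import numFieldNormedType.Exports.
Local Open Scope classical_set_scope.
Local Open Scope ring_scope.

Definition unit_itv (R : realType) : set R := `[0, 1]%classic.
Arguments unit_itv R : clear implicits.

Definition is_path (R : realType) (X : topologicalType) (g : R -> X) : Prop :=
  {within unit_itv R, continuous g}.

Definition path_connected (R : realType) (X : topologicalType) : Prop :=
  forall x y : X, exists g : R -> X, is_path g /\ g 0 = x /\ g 1 = y.

Definition simply_connected (R : realType) (X : topologicalType) : Prop :=
  path_connected R X /\
  forall g : R -> X, is_path g -> g 0 = g 1 ->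
    exists H : R * R -> X,
      {within unit_itv R `*` unit_itv R, continuous H} /\
      (forall t, unit_itv R t -> H (t, 0) = g t /\ H (t, 1) = g 0) /\
      (forall u, unit_itv R u -> H (0, u) = g 0 /\ H (1, u) = g 0).

(* Main.v *)
Require Import Defs.
From HB Require Import structures.
From mathcomp Require Import all_boot all_order all_algebra.
From mathcomp Require Import all_classical all_reals all_analysis.
Import Order.TTheory GRing.Theory Num.Theory.
Import numFieldNormedType.Exports.
Local Open Scope classical_set_scope.
Local Open Scope ring_scope.

Lemma ext_lemma (R : realType) (m n : nat) (X : topologicalType)
  (phi : X -> 'rV[R]_m) (h : X -> 'rV[R]_n) (K : set X) :
  continuous phi -> injective phi -> continuous h -> compact K ->
  exists e : 'rV[R]_m -> 'rV[R]_n, continuous e /\ forall x, K x -> e (phi x) = h x.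
Proof.
move=> cphi iphi ch cK.
pose C := phi @` K.
have cC : compact C.
  by apply: continuous_compact => //; exact: continuous_subspaceT.
have clC : closed C by apply: compact_closed => //; exact: norm_hausdorff.
pose u (y : 'rV[R]_m) : 'rV[R]_n :=
  match pselect (exists x, K x /\ phi x = y) with
  | left P => h (projT1 (cid P)) | right _ => 0 end.
have uK x : K x -> u (phi x) = h x.
  move=> Kx; rewrite /u; case: pselect => [P|]; last by case; exists x.
  by case: (cid P) => /= x' [_ /iphi ->].
have uC : {within C, continuous u}.
  apply/continuous_closedP => Z cZ; apply/closed_subspaceP.
  exists (phi @` (K `&` h @^-1` Z)).
    apply: compact_closed; first exact: norm_hausdorff.
    apply: continuous_compact; first exact: continuous_subspaceT.
    apply: compact_closedI => //; exact: (proj1 (continuous_closedP _) ch).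
  apply/seteqP; split => y.
    case=> -[x [Kx Zx] <-] _; split; last by exists x.
    by change (Z (u (phi x))); rewrite uK.
  case=> Zy [x Kx xy]; change (Z (u y)) in Zy; split; last by exists x.
  by exists x => //; split => //; rewrite /preimage /= -uK // xy.
have : forall j : 'I_n, exists ej : 'rV[R]_m -> R,
    continuous ej /\ forall y, C y -> ej y = u y ord0 j.
  move=> j.
  have ujC : {within C, continuous (fun y => u y ord0 j)}.
    move=> y; exact: (continuous_comp (uC y) (@coord_continuous R 1 n ord0 j _)).
  have := compact_bounded (continuous_compact ujC cC).
  case=> M0 [_ HM].
  have M1 : 0 < `|M0| + 1 by rewrite ltr_wpDl.
  have [ej [ejE ejc _]] : exists ej, [/\ {in C, (fun y => u y ord0 j : R^o) =1 ej}, continuous ej &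
     forall x, `|ej x| <= `|M0| + 1].
    apply: (@continuous_bounded_extension 'rV[R]_m R pseudometric_normal C clC
      (fun y => u y ord0 j : R^o) (`|M0| + 1) M1 ujC).
    move=> x Cx; apply: (HM (`|M0| + 1)); first by rewrite (le_lt_trans (ler_norm _)) // ltrDl.
    by exists x.
  exists ej; split => // y Cy; rewrite ejE //; exact/mem_set.
case/choice => E HE.
exists (fun y => \row_j E j y); split.
  move=> y; apply/(cvg_ballP (FF := nbhs_filter y)) => eps eps0.
  have H j : \forall z \near y, ball (E j y) eps (E j z).
    exact: (cvg_ball (proj1 (HE j) y) eps0).
  apply: (filterS _ (@filter_forall _ _ _ _ _ H)) => z Hz /=; split => // i j; rewrite !mxE; exact: Hz.
by move=> x Kx; apply/rowP => j; rewrite mxE (proj2 (HE j)) ?uK //; exists x.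
Qed.

Theorem mainTheorem4 (R : realType) (m n : nat)
  (X Y : topologicalType)
  (phi : X -> 'rV[R]_m) (rho : 'rV[R]_n -> Y) (s : Y -> 'rV[R]_n)
  (F : set ('rV[R]_m -> 'rV[R]_n)) :
  connected [set: X] ->
  simply_connected R X ->
  continuous phi -> injective phi ->
  continuous rho -> (forall y : Y, exists x, rho x = y) ->
  continuous s -> rho \o s = id ->
  (forall f, F f -> continuous f) ->
  (forall f : 'rV[R]_m -> 'rV[R]_n, continuous f ->
     closure (F : set {family compact, 'rV[R]_m -> 'rV[R]_n}) f) ->
  forall g : X -> Y, continuous g ->
    closure ([set rho \o f \o phi | f in F] : set {compact-open, X -> Y}) g.
Proof.
move=> _ _ cphi iphi crho _ cs rhos Fc dense g cg.
have csg : continuous (s \o g) by move=> x; exact: (continuous_comp (cg x) (cs _)).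
have approx : forall K (eps : R), compact K -> 0 < eps ->
    exists f, F f /\ forall x, K x -> ball (s (g x)) eps (f (phi x)).
  move=> K eps cK eps0.
  have [e [ce eK]] := @ext_lemma R m n X phi (s \o g) K cphi iphi csg cK.
  have cC : compact (phi @` K).
    by apply: continuous_compact => //; exact: continuous_subspaceT.
  have Eent : entourage [set xy : 'rV[R]_n * 'rV[R]_n | ball xy.1 eps xy.2].
    by rewrite -entourage_ballE; exists eps.
  have [f [Ff Hf]] := dense e ce _ (fam_nbhs _ Eent cC).
  exists f; split => // x Kx; rewrite -[s (g x)]/((s \o g) x) -eK //.
  by apply: (Hf (phi x)); exists x.
pose H : set_system (X -> 'rV[R]_n) := [set P | exists K (eps : R),
  [/\ compact K, 0 < eps & forall f, F f ->
      (forall x, K x -> ball (s (g x)) eps (f (phi x))) -> P (f \o phi)]].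
have HF : Filter H.
  constructor.
  - by exists set0, 1; split => //; exact: compact0.
  - move=> P Q [K1 [e1 [cK1 e10 HP]]] [K2 [e2 [cK2 e20 HQ]]].
    exists (K1 `|` K2), (Num.min e1 e2); split; [exact: compactU|by rewrite lt_min e10|].
    move=> f Ff Hf; split; [apply: HP|apply: HQ] => // x Kx;
      (apply: le_ball (Hf x _); [by rewrite ge_min lexx ?orbT|by [left|right]]).
  - move=> P Q PQ [K [e [cK e0 HP]]]; exists K, e; split => // f Ff Hf; exact/PQ/HP.
have HPF : ProperFilter H.
  apply: Build_ProperFilter_ex => // P [K [e [cK e0 HP]]].
  have [f [Ff Hf]] := approx K e cK e0; exists (f \o phi); exact: HP.
rewrite closureEcvg.
exists ((fun h : X -> 'rV[R]_n => (rho \o h : {compact-open, X -> Y})) @ H).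
  exact: fmap_proper_filter.
split.
  have Hs : H --> (s \o g : {family compact, X -> 'rV[R]_n}).
    apply/fam_cvgP => K' cK' P /uniform_nbhs [E [entE EP]].
    move: entE; rewrite -entourage_ballE => -[eps /= eps0 epsE].
    exists K', eps; split => // f Ff Hf; apply: EP => y Ky; apply: epsE; exact: Hf.
  apply/compact_open_cvgP => K O cK oO gKO.
  have sgKO : (s \o g) @` K `<=` rho @^-1` O.
    move=> _ [x Kx <-]; rewrite /preimage /=.
    have -> : rho (s (g x)) = g x by rewrite -[RHS]/(id (g x)) -rhos.
    by apply: gKO; exists x.
  have oO' : open (rho @^-1` O) by exact: (proj1 (continuousP _) crho _ oO).
  have := Hs _ (fam_compact_nbhs oO' sgKO cK csg).
  by apply: filterS => h Hh _ [x Kx <-]; exact: Hh.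
move=> P AP; exists set0, 1; split => //; first exact: compact0.
by move=> f Ff _; apply: AP; exists f.
Qed.
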